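(* Let $A$ be a commutative ring with $1$, $M\in\operatorname{Sym}_n(A)$ and $a\in(\Sigma(M):A^n)$. Then $b^2\in(\Sigma(M):A^n)$ for every $b\in\Sigma(a)$.
   Context: $\Sigma A^2$ denotes the set of finite sums of squares in $A$. A matrix $N\in\operatorname{Sym}_n(A)$ is a sum of squares if $N=\sum_{i=1}^m w_iw_i^{t}$ for some column vectors $w_i\in A^n$. For $M\in\operatorname{Sym}_n(A)$, $\Sigma(M)$ is the set of $v\in A^n$ such that $sM=vv^{t}+N$ for some $s\in\Sigma A^2$ and some sum of squares $N\in\operatorname{Sym}_n(A)$; it is an $A$-submodule of $A^n$. For $n=1$: $b\in\Sigma(a)$ iff $sa=b^2+t$ for some $s,t\in\Sigma A^2$. $(\Sigma(M):A^n)=\{c\in A: cv\in\Sigma(M)\text{ for all }v\in A^n\}$. *)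

(* Defs.v *)
From HB Require Import structures.
From mathcomp Require Import all_boot all_order all_algebra.
Set Implicit Arguments. Unset Strict Implicit. Unset Printing Implicit Defensive.
Import GRing.Theory.
Local Open Scope ring_scope.

(* A commutative ring with 1 (possibly the zero ring): comPzRingType. *)

Definition sos_elt (A : comPzRingType) (x : A) : Prop :=
  exists s : seq A, x = \sum_(y <- s) y ^+ 2.

Definition sos_mx (A : comPzRingType) (n : nat) (N : 'M[A]_n) : Prop :=
  exists s : seq 'cV[A]_n, N = \sum_(w <- s) (w *m w^T).

Definition Sigma (A : comPzRingType) (n : nat) (M : 'M[A]_n) (v : 'cV[A]_n) : Prop :=
  exists (s : A) (N : 'M[A]_n), sos_elt s /\ sos_mx N /\ s *: M = v *m v^T + N.

(* n = 1 case: b in Sigma(a) iff s a = b^2 + t with s, t in SA^2. *)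
Definition Sigma1 (A : comPzRingType) (a b : A) : Prop :=
  exists s t : A, sos_elt s /\ sos_elt t /\ s * a = b ^+ 2 + t.

Definition Sigma_colon (A : comPzRingType) (n : nat) (M : 'M[A]_n) (c : A) : Prop :=
  forall v : 'cV[A]_n, Sigma M (c *: v).

(* Main.v *)
Require Import Defs.
From HB Require Import structures.
From mathcomp Require Import all_boot all_order all_algebra.
From mathcomp Require Import ring.
Import GRing.Theory.
Local Open Scope ring_scope.

Lemma sos_mx_add (A : comPzRingType) n (N1 N2 : 'M[A]_n) :
  sos_mx N1 -> sos_mx N2 -> sos_mx (N1 + N2).
Proof. by move=> [s1 ->] [s2 ->]; exists (s1 ++ s2); rewrite big_cat. Qed.

Lemma outerZ (A : comPzRingType) n (c : A) (v : 'cV[A]_n) :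
  (c *: v) *m (c *: v)^T = c ^+ 2 *: (v *m v^T).
Proof. by rewrite linearZ /= -scalemxAl -scalemxAr scalerA expr2. Qed.

Lemma sos_mx_outer (A : comPzRingType) n (x : A) (v : 'cV[A]_n) :
  sos_elt x -> sos_mx (x *: (v *m v^T)).
Proof.
move=> [s ->]; exists (map (fun y => y *: v) s).
rewrite big_map scaler_suml; apply: eq_bigr => y _; by rewrite outerZ.
Qed.

Lemma sos_elt_mulsq (A : comPzRingType) (b x : A) :
  sos_elt x -> sos_elt (b ^+ 2 * x).
Proof.
move=> [s ->]; exists (map (fun y => b * y) s).
rewrite big_map mulr_sumr; apply: eq_bigr => y _; by rewrite exprMn.
Qed.

Theorem corollary3p10 (A : comPzRingType) (n : nat) (M : 'M[A]_n)
  (hM : M^T = M) (a : A) (ha : Sigma_colon M a) :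
  forall b : A, Sigma1 a b -> Sigma_colon M (b ^+ 2).
Proof.
move=> b [s1 [t [_ [ht he]]]] v.
have [s [N [hs [hN hE]]]] := ha (s1 *: v).
exists s, ((b ^+ 2 * t) *: (v *m v^T) + (b ^+ 2 * t) *: (v *m v^T)
           + (t *: v) *m (t *: v)^T + N).
split=> //; split.
  apply: sos_mx_add => //; apply: sos_mx_add; last by exists [:: t *: v]; rewrite big_seq1.
  by apply: sos_mx_add; apply: sos_mx_outer; apply: sos_elt_mulsq.
rewrite hE scalerA outerZ outerZ outerZ.
have -> : (a * s1) ^+ 2 = (b ^+ 2) ^+ 2 + (b ^+ 2 * t + b ^+ 2 * t + t ^+ 2).
  by rewrite mulrC he; ring.
by rewrite scalerDl !scalerDl !addrA.
Qed.
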